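(* Let $\mathrm{HC}$ be the symmetric operad generated by operations $m^{2p}_{\underline t}$ of arity $t\geqslant2$ and homological degree $2p\geqslant0$, each spanning the trivial representation of $S_t$, with $\overline m_I=\sum_{p\geqslant0}m^{2p}_I$, subject, for each $n\geqslant3$ and pairwise distinct $i,j,j'\in\underline n$, to \[ \sum_{\substack{I\sqcup J=\underline n\\ i\in I;\ j,j'\in J}}\overline m_{I\sqcup\{\star\}}\circ_\star\overline m_J=\sum_{\substack{I\sqcup J=\underline n\\ j\in I;\ i,j'\in J}}\overline m_{I\sqcup\{\star\}}\circ_\star\overline m_J, \] understood degree by degree. Then, for $n\geqslant2$: the element \[ \sum_{\substack{I\sqcup J_1=\underline n\\ j_1,j_2\in J_1}}\overline m_{I\sqcup\{\star\}}\circ_\star\overline m_{J_1} \] does not depend on the choice of distinct $j_1,j_2\in\underline n$; and for each $i\in\underline n$, the element \[ \sum_{\substack{I\sqcup J_1=\underline n\\ j_1\in J_1,\ i\in I}}\overline m_{J_1\sqcup\{\star\}}\circ_\star\overline m_I \] does not depend on the choice of $j_1\in\underline n\setminus\{i\}$. (In all sums only decompositions for which the indicated generators exist, i.e. have arity at least $2$, occur.)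
   Context: Work over a field $\Bbbk$ of characteristic zero, homologically graded vector spaces; $\underline n=\{1,\dots,n\}$. Symmetric operads are species with compositions $\circ_\star:\mathcal P(I\sqcup\{\star\})\otimes\mathcal P(J)\to\mathcal P(I\sqcup J)$; $x_I$ denotes the relabeling of a fully symmetric operation to a set $I$ of the appropriate size; relations are imposed with all relabelings. Identities involving the infinite sums $\overline m$ are to be read as families of identities obtained by separating terms by total homological degree. *)

(* Defs.v *)
(* Concrete model of the symmetric operad HC of the paper:
   the free symmetric operad on fully symmetric generators m^{2p}_t (t >= 2)
   is presented by planar rooted trees (leaves labelled by nat, internal
   nodes decorated by p, the generator m^{2p}) modulo reordering of the
   children of a node; the operadic ideal is spanned by the relations grafted
   into arbitrary contexts (and with arbitrary trees grafted on their leaves),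
   with all relabelings. *)
From HB Require Import structures.
From mathcomp Require Import all_boot all_algebra.
Set Implicit Arguments. Unset Strict Implicit. Unset Printing Implicit Defensive.
Import GRing.Theory.
Local Open Scope ring_scope.

(* Leaf l : the identity labelled l;  Node p ch : m^{2p} with inputs ch. *)
Inductive tree : Type := Leaf of nat | Node of nat & seq tree.

Fixpoint leaves (t : tree) : seq nat :=
  match t with Leaf l => [:: l] | Node _ ch => flatten (map leaves ch) end.

Fixpoint graft (f : nat -> tree) (t : tree) : tree :=
  match t with Leaf l => f l | Node p ch => Node p (map (graft f) ch) end.

Fixpoint tree_eqb (a b : tree) : bool :=
  match a, b with
  | Leaf x, Leaf y => x == y
  | Node p l, Node q m => (p == q) && all2 tree_eqb l m
  | _, _ => false
  end.

Inductive tstep : tree -> tree -> Prop :=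
| ts_swap p l a b r :
    tstep (Node p (l ++ a :: b :: r)) (Node p (l ++ b :: a :: r))
| ts_in p l t t' r :
    tstep t t' -> tstep (Node p (l ++ t :: r)) (Node p (l ++ t' :: r)).

(* m^{2p}_{I ⊔ {*}} o_* m^{2q}_J *)
Definition comp2 (p q : nat) (I J : seq nat) : tree :=
  Node p (rcons (map Leaf I) (Node q (map Leaf J))).

Definition part (S : seq nat) (A : {set 'I_(size S)}) : seq nat :=
  [seq nth 0%N S (val k) | k <- enum A].

Section HC.
Variable K : fieldType.

(* vector of the free operad (finitely supported function on trees) *)
Definition vec_of (s : seq (K * tree)) : tree -> K :=
  fun t => \sum_(x <- s) (if tree_eqb x.2 t then x.1 else 0).

(* Degree-2d component of
   sum over I ⊔ A = S with P A, |I| >= 1, |A| >= 2 of  mbar_{I ⊔ *} o_* mbar_A,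
   i.e. sum over p + q = d of m^{2p}_{I ⊔ *} o_* m^{2q}_A. *)
Definition split_terms (S : seq nat) (d : nat)
    (P : {set 'I_(size S)} -> bool) : seq (K * tree) :=
  flatten [seq [seq (1, comp2 p (d - p) (part (~: A)) (part A)) | p <- iota 0 d.+1]
          | A <- enum [set A : {set 'I_(size S)} |
                        [&& P A, (1 <= #|~: A|)%N & (2 <= #|A|)%N]]].

(* degree-2d component of LHS - RHS of the defining relation (labels S) *)
Definition rel_terms (S : seq nat) (d i j j' : nat) : seq (K * tree) :=
  @split_terms S d (fun A => [&& i \in part (~: A), j \in part A & j' \in part A])
  ++ [seq (- x.1, x.2) | x <- @split_terms S d
        (fun A => [&& j \in part (~: A), i \in part A & j' \in part A])].

Inductive hc_gen : (tree -> K) -> Prop :=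
| gen_reorder t t' : tstep t t' -> hc_gen (vec_of [:: (1, t); (-1, t')])
| gen_rel (S : seq nat) (d i j j' h : nat) (C : tree) (f : nat -> tree) :
    uniq S -> i \in S -> j \in S -> j' \in S ->
    i != j -> i != j' -> j != j' ->
    count_mem h (leaves C) = 1%N ->
    hc_gen (vec_of [seq (x.1, graft (fun l => if l == h then graft f x.2
                                             else Leaf l) C)
                   | x <- rel_terms S d i j j']).

(* the operadic ideal (together with the reordering identifications) *)
Inductive hc_span : (tree -> K) -> Prop :=
| hc_span0 : hc_span (fun _ => 0)
| hc_spanD (c : K) (g v : tree -> K) :
    hc_gen g -> hc_span v -> hc_span (fun t => c * g t + v t).

Definition hc_eq (x y : seq (K * tree)) : Prop :=
  hc_span (fun t => vec_of x t - vec_of y t).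

End HC.
Arguments split_terms {K} S d P.
Arguments rel_terms {K} S d i j j'.

(* Main.v *)
Require Import Defs.
From HB Require Import structures.
From mathcomp Require Import all_boot all_algebra.
From Stdlib Require Import FunctionalExtensionality.
Set Implicit Arguments. Unset Strict Implicit.
Import GRing.Theory.
Local Open Scope ring_scope.

Fixpoint graft_leaf (t : tree) : graft Leaf t = t :=
  match t with
  | Leaf l => erefl
  | Node p ch => f_equal (Node p)
      ((fix aux (ch : seq tree) : map (graft Leaf) ch = ch :=
          match ch with
          | [::] => erefl
          | c :: cs => f_equal2 cons (graft_leaf c) (aux cs)
          end) ch)
  end.

Section H.
Variable K : fieldType.

Lemma span_ext (v w : tree -> K) : hc_span v -> v =1 w -> hc_span w.
Proof. by move=> H E; have <- : v = w by apply: functional_extensionality. Qed.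

Lemma span_add (v w : tree -> K) : hc_span v -> hc_span w ->
  hc_span (fun t => v t + w t).
Proof.
move=> Hv Hw; elim: Hv.
  by apply: (span_ext Hw) => t; rewrite add0r.
move=> c g v' Hg _ IH; apply: (span_ext (hc_spanD c Hg IH)) => t.
by rewrite addrA.
Qed.

Lemma span_opp (v : tree -> K) : hc_span v -> hc_span (fun t => - v t).
Proof.
elim.
  by apply: (span_ext (hc_span0 K)) => t; rewrite oppr0.
move=> c g v' Hg _ IH; apply: (span_ext (hc_spanD (- c) Hg IH)) => t.
by rewrite opprD mulNr.
Qed.

Lemma hc_eq_ext (x y : seq (K * tree)) : vec_of x =1 vec_of y -> hc_eq x y.
Proof. by move=> E; apply: (span_ext (hc_span0 K)) => t; rewrite E subrr. Qed.

Lemma hc_eq_sym (x y : seq (K * tree)) : hc_eq x y -> hc_eq y x.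
Proof. by move/span_opp => H; apply: (span_ext H) => t; rewrite opprB. Qed.

Lemma hc_eq_trans (x y z : seq (K * tree)) : hc_eq x y -> hc_eq y z -> hc_eq x z.
Proof.
move=> H1 H2; apply: (span_ext (span_add H1 H2)) => t.
by rewrite addrA subrK.
Qed.

Definition G (S : seq nat) d (A : {set 'I_(size S)}) t : K :=
  \sum_(p <- iota 0 d.+1)
     (if tree_eqb (comp2 p (d - p) (part (~: A)) (part A)) t then 1 else 0).

Lemma vec_split S d P t :
  vec_of (split_terms S d P) t =
  \sum_(A : {set 'I_(size S)})
     (if P A && ((1 <= #|~: A|)%N && (2 <= #|A|)%N) then G d A t else 0).
Proof.
rewrite /vec_of /split_terms big_flatten big_map big_enum big_mkcond.
apply: eq_bigr => A _; rewrite in_set; case: ifP => _; last by [].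
by rewrite big_map.
Qed.

Lemma vec_rel S d i j j' t :
  vec_of (rel_terms (K:=K) S d i j j') t =
  vec_of (split_terms S d
    (fun A => [&& i \in part (~: A), j \in part A & j' \in part A])) t -
  vec_of (split_terms S d
    (fun A => [&& j \in part (~: A), i \in part A & j' \in part A])) t.
Proof.
rewrite /vec_of /rel_terms big_cat big_map /= -sumrN; congr (_ + _).
by apply: eq_bigr => x _; case: ifP; rewrite ?oppr0.
Qed.

Lemma mem_part (S : seq nat) x : uniq S -> x \in S ->
  exists k : 'I_(size S), forall A, (x \in part A) = (k \in A).
Proof.
move=> U Hx.
have Hk : (index x S < size S)%N by rewrite index_mem.
exists (Ordinal Hk) => A; apply/mapP/idP.
  case=> k' Hk' Ex; rewrite mem_enum in Hk'.
  have -> : Ordinal Hk = k' by apply: val_inj; rewrite /= Ex index_uniq // ltn_ord.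
  by [].
move=> HA; exists (Ordinal Hk); first by rewrite mem_enum.
by rewrite /= nth_index.
Qed.

Lemma rel_span S d i j j' : uniq S -> i \in S -> j \in S -> j' \in S ->
  i != j -> i != j' -> j != j' ->
  hc_span (fun t => vec_of (rel_terms (K:=K) S d i j j') t).
Proof.
move=> U Hi Hj Hj' ij ij' jj'.
pose h := 0%N.
have Hc : count_mem h (leaves (Leaf h)) = 1%N by [].
have := @gen_rel K S d i j j' h (Leaf h) Leaf U Hi Hj Hj' ij ij' jj' Hc.
have -> : [seq (x.1, graft (fun l => if l == h then graft Leaf x.2 else Leaf l) (Leaf h))
          | x <- rel_terms (K:=K) S d i j j'] = rel_terms S d i j j'.
  rewrite -[RHS]map_id; apply: eq_map => -[a b] /=.
  by rewrite ?eqxx graft_leaf.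
move=> Hg; apply: (span_ext (hc_spanD 1 Hg (hc_span0 K))) => t.
by rewrite mul1r addr0.
Qed.



Lemma keyL S d i j j' : uniq S -> i \in S -> j \in S -> j' \in S ->
  i != j -> i != j' -> j != j' ->
  hc_eq (split_terms (K:=K) S d (fun A => (j \in part A) && (j' \in part A)))
        (split_terms (K:=K) S d (fun A => (i \in part A) && (j' \in part A))).
Proof.
move=> U Hi Hj Hj' ij ij' jj'.
apply: (span_ext (rel_span d U Hi Hj Hj' ij ij' jj')) => t.
rewrite vec_rel !vec_split -!sumrB; apply: eq_bigr => A _.
have [ki Ei] := mem_part U Hi; have [kj Ej] := mem_part U Hj.
have [kk Ek] := mem_part U Hj'.
rewrite ?Ei ?Ej ?Ek ?in_setC.
case: (ki \in A); case: (kj \in A); case: (kk \in A);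
  case: (_ && _); rewrite /= ?subrr ?subr0 ?sub0r ?opprK //.
Qed.

Lemma keyL2 S d i j1 j1' : uniq S -> i \in S -> j1 \in S -> j1' \in S ->
  j1 != i -> j1' != i -> j1 != j1' ->
  hc_eq (split_terms (K:=K) S d (fun A => (i \in part A) && (j1 \in part (~: A))))
        (split_terms (K:=K) S d (fun A => (i \in part A) && (j1' \in part (~: A)))).
Proof.
move=> U Hi Hj Hj' ij ij' jj'.
apply: (span_ext (rel_span d U Hj Hj' Hi jj' ij ij')) => t.
rewrite vec_rel !vec_split -!sumrB; apply: eq_bigr => A _.
have [ki Ei] := mem_part U Hi; have [kj Ej] := mem_part U Hj.
have [kk Ek] := mem_part U Hj'.
rewrite ?Ei ?Ej ?Ek ?in_setC.
case: (ki \in A); case: (kj \in A); case: (kk \in A);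
  case: (_ && _); rewrite /= ?subrr ?subr0 ?sub0r ?opprK //.
Qed.


Lemma swapX S d a b :
  hc_eq (split_terms (K:=K) S d (fun A => (a \in part A) && (b \in part A)))
        (split_terms (K:=K) S d (fun A => (b \in part A) && (a \in part A))).
Proof.
apply: hc_eq_ext => t; rewrite !vec_split; apply: eq_bigr => A _.
by rewrite [(a \in _) && _]andbC.
Qed.

Lemma firstX S d a b c : uniq S -> a \in S -> b \in S -> c \in S ->
  a != b -> a != c ->
  hc_eq (split_terms (K:=K) S d (fun A => (a \in part A) && (b \in part A)))
        (split_terms (K:=K) S d (fun A => (a \in part A) && (c \in part A))).
Proof.
move=> U Ha Hb Hc ab ac.
have [<-|bc] := eqVneq b c; first by apply: hc_eq_ext => t.
apply: hc_eq_trans (swapX _ _ _ _) _.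
apply: hc_eq_trans (swapX _ _ _ _).
apply: keyL => //; by rewrite eq_sym.
Qed.

Lemma part1 S d a b c e : uniq S -> a \in S -> b \in S -> c \in S -> e \in S ->
  a != b -> c != e ->
  hc_eq (split_terms (K:=K) S d (fun A => (a \in part A) && (b \in part A)))
        (split_terms (K:=K) S d (fun A => (c \in part A) && (e \in part A))).
Proof.
move=> U Ha Hb Hc He ab ce.
have [ca|ca] := eqVneq c a; first by subst c; apply: firstX.
have [cb|cb] := eqVneq c b.
  subst c; apply: hc_eq_trans (swapX _ _ _ _) _.
  by apply: firstX => //; rewrite eq_sym.
apply: hc_eq_trans (firstX _ U Hc Hb He cb ce).
exact: keyL.
Qed.

End H.
Unset Implicit Arguments. Set Strict Implicit.

Theorem mainTheorem20 (K : fieldType) (hK : [pchar K] =i pred0)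
    (n : nat) (hn : (2 <= n)%N) :
  (forall (d j1 j2 j1' j2' : nat),
      j1 \in iota 1 n -> j2 \in iota 1 n -> j1 != j2 ->
      j1' \in iota 1 n -> j2' \in iota 1 n -> j1' != j2' ->
      hc_eq (split_terms (K:=K) (iota 1 n) d
               (fun A => (j1 \in part A) && (j2 \in part A)))
            (split_terms (K:=K) (iota 1 n) d
               (fun A => (j1' \in part A) && (j2' \in part A)))) /\
  (forall (d i j1 j1' : nat),
      i \in iota 1 n -> j1 \in iota 1 n -> j1' \in iota 1 n ->
      j1 != i -> j1' != i ->
      hc_eq (split_terms (K:=K) (iota 1 n) d
               (fun A => (i \in part A) && (j1 \in part (~: A))))
            (split_terms (K:=K) (iota 1 n) d
               (fun A => (i \in part A) && (j1' \in part (~: A))))).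
Proof.
have U := iota_uniq 1 n.
split.
  move=> d j1 j2 j1' j2' H1 H2 H12 H1' H2' H12'.
  exact: part1.
move=> d i j1 j1' Hi H1 H1' n1 n1'.
have [<-|ne] := eqVneq j1 j1'; first by apply: hc_eq_ext => t.
exact: keyL2.
Qed.
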